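(* Let $\mathbf a=(a_1,\dots,a_m)$ and $\mathbf e=(e_1,\dots,e_{m-1})$ be partitions such that $\mathbf a\prec'\mathbf e$ and $\sum_{i=1}^{m-1}e_i\le\sum_{i=1}^m a_i$. Let $\theta=\#\{i: e_i>0\}$ and $\bar\theta=\#\{i: a_i>0\}$. Then $\bar\theta\ge\theta$.
   Context: A partition is a nonincreasing finite sequence of nonnegative integers. 1-step generalized majorization: for nonincreasing integer sequences $\mathbf a=(a_1,\dots,a_m)$ and $\mathbf e=(e_1,\dots,e_{m-1})$, set $e_m=-\infty$ and $h=\min\{i: e_i<a_i\}$; then $\mathbf a\prec'\mathbf e$ means $e_i=a_{i+1}$ for all $h\le i\le m-1$. *)

(* Defs.v *)
From mathcomp Require Import all_boot.

Definition is_partition (s : seq nat) : bool := sorted geq s.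

(* 1-step generalized majorization  a <' e, for a of length m >= 1 and
   e of length m-1, with the convention e_m = -oo.  Indices are 0-based:
   position i here is position i+1 in the paper. *)
Definition e_lt_a (a e : seq nat) (i : nat) : bool :=
  (i == (size a).-1) || (nth 0 e i < nth 0 a i).

(* h (0-based) = min { i < m : e_i < a_i }, always exists since e_{m} = -oo *)
Definition maj_h (a e : seq nat) : nat := find (e_lt_a a e) (iota 0 (size a)).

Definition gen_maj1 (a e : seq nat) : Prop :=
  forall i, maj_h a e <= i -> i < (size a).-1 -> nth 0 e i = nth 0 a i.+1.

Definition num_pos (s : seq nat) : nat := count (fun x => 0 < x) s.

(* Main.v *)
Require Import Defs.
From mathcomp Require Import all_boot.
From mathcomp Require Import zify.

Lemma L1 (s : seq nat) : sorted geq s -> forall i j, i <= j -> nth 0 s j <= nth 0 s i.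
Proof.
elim: s => [|x s IH] //= Hs i j Hij; first by rewrite !nth_nil.
have Hs' := path_sorted Hs.
have Hx : forall k, nth 0 s k <= x.
  move=> k; case: s Hs Hs' IH => [|y s] /= Hs Hs' IH; first by rewrite nth_nil.
  move/andP: Hs => [Hxy _]; apply: leq_trans (IH Hs' 0 k (leq0n _)) Hxy.
case: i Hij => [|i] /=; case: j => [|j] //= Hij; try exact: Hx.
exact: IH.
Qed.

Lemma L2 (s : seq nat) : sorted geq s -> nth 0 s (num_pos s) = 0.
Proof.
elim: s => [|x s IH] //= Hs; rewrite /num_pos /=.
case: x Hs => [|x] Hs /=.
  by have := @L1 (0 :: s) Hs _ _ (leq0n (0 + count [eta leq 1] s)) => /=; case: nth.
exact: IH (path_sorted Hs).
Qed.

Lemma L3 (s : seq nat) : sorted geq s -> forall k, nth 0 s k = 0 -> num_pos s <= k.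
Proof.
elim: s => [|x s IH] //= Hs k Hk; rewrite /num_pos /=.
have Hs' := path_sorted Hs.
case: k Hk => [|k] /= Hk.
  subst x; rewrite add0n; apply: (IH Hs' 0).
  case: s Hs Hs' IH => [|y s] //= Hs _ _. move/andP: Hs => [H _]. lia.
have := IH Hs' k Hk; rewrite /num_pos; case: (0 < x) => /=; lia.
Qed.

Lemma L5 (s u : seq nat) : size s = size u ->
  (forall i, i < size s -> nth 0 s i <= nth 0 u i) -> sumn s <= sumn u.
Proof.
elim: s u => [|x s IH] [|y u] //= [Hsz] H.
apply: leq_add; first exact: (H 0).
apply: IH => // i Hi; exact: (H i.+1).
Qed.

Lemma L4 (s u : seq nat) : size s = size u ->
  (forall i, i < size s -> nth 0 s i <= nth 0 u i) -> sumn u <= sumn s ->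
  forall i, nth 0 u i = nth 0 s i.
Proof.
elim: s u => [|x s IH] [|y u] //= [Hsz] H Hsum i.
have H0 := H 0 isT.
have H1 : forall i, i < size s -> nth 0 s i <= nth 0 u i by move=> j Hj; exact: (H j.+1).
have Hle := @L5 s u Hsz H1.
case: i => [|i] /=; first by simpl in H0; lia.
apply: IH => //; simpl in H0; lia.
Qed.

Theorem lemma5p5 (a e : seq nat) :
  0 < size a ->
  size e = (size a).-1 ->
  is_partition a -> is_partition e ->
  gen_maj1 a e ->
  sumn e <= sumn a ->
  num_pos e <= num_pos a.
Proof.
move=> Hm Hse Ha He Hg Hsum.
set m := size a in Hm Hse.
set t := num_pos a.
have Hat := L2 a Ha.
have Haz : forall j, t <= j -> nth 0 a j = 0.
  move=> j Hj; have := L1 a Ha _ _ Hj; rewrite Hat; lia.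
have [Htm|Htm] := leqP m.-1 t.
  apply: leq_trans (count_size _ _) _; rewrite Hse; exact: Htm.
apply: (L3 e He).
set h := maj_h a e.
have Hbefore : forall i, i < h -> (nth 0 a i <= nth 0 e i) /\ i != m.-1.
  move=> i Hi.
  have Him : i < m.
    move: Hi; rewrite /h /maj_h; have := find_size (e_lt_a a e) (iota 0 m).
    rewrite size_iota /m; lia.
  have := before_find 0 Hi; rewrite nth_iota // add0n /e_lt_a.
  case: eqP => //= Hne; rewrite /m; case: ltnP => // Hle _; split => //; exact/eqP.
have [Hht|Hth] := leqP h t.
  rewrite (Hg t Hht Htm); exact: Haz.
have Hhm : h <= m.-1.
  rewrite leqNgt; apply/negP => Hlt.
  by have [_ /eqP] := Hbefore _ Hlt.
have Hdrop : drop h e = drop h.+1 a.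
  apply: (@eq_from_nth _ 0); first by rewrite !size_drop Hse; lia.
  move=> i; rewrite size_drop Hse => Hi.
  rewrite !nth_drop Hg; [by rewrite addSn | lia | lia].
have Hah : nth 0 a h = 0 by apply: Haz; lia.
have Hda : drop h a = nth 0 a h :: drop h.+1 a by apply: drop_nth; lia.
have {}Hsum : sumn (take h e) <= sumn (take h a).
  have E1 : sumn e = sumn (take h e) + sumn (drop h e) by rewrite -sumn_cat cat_take_drop.
  have E2 : sumn a = sumn (take h a) + sumn (drop h a) by rewrite -sumn_cat cat_take_drop.
  move: Hsum; rewrite E1 E2 Hdrop Hda Hah /= add0n leq_add2r //.
have Hsz1 : size (take h a) = h by rewrite size_takel //; lia.
have Hsz2 : size (take h e) = h by rewrite size_takel //; lia.
have := L4 (take h a) (take h e) _ _ Hsum t.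
rewrite !nth_take // Haz //; apply.
  by rewrite Hsz1 Hsz2.
move=> i; rewrite Hsz1 => Hi; rewrite !nth_take //; exact: (Hbefore i Hi).1.
Qed.
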